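(* Let $(\Omega,\mathcal{F},\mathbb{P})$ be a complete probability space, let $E$ be a Polish space, and let $X=\{X_t\}_{t\geq0}$ be an $E$-valued stochastic process that is measurable, i.e. the map $(\omega,t)\mapsto X_t(\omega)$ is $\mathcal{F}\otimes\mathcal{B}([0,\infty))/\mathcal{B}(E)$-measurable. Let $AP$ be a set of atomic propositions and assign to each $a\in AP$ a Borel set $B_a\subset E$. Then for every MTL-formula $\phi$, the set $\llbracket\phi\rrbracket=\{(\omega,t)\in\Omega\times[0,\infty) : X(\omega),t\models\phi\}$ belongs to $\mathcal{F}\otimes\mathcal{B}([0,\infty))$, and for every $t\geq0$ the set $\llbracket\phi\rrbracket(t)=\{\omega\in\Omega : X(\omega),t\models\phi\}$ belongs to $\mathcal{F}$.
   Context: MTL-formulas are generated by the grammar $\phi::=a\mid\phi_1\wedge\phi_2\mid\lnot\phi\mid\phi_1\mathcal{U}_I\phi_2$, where $a\in AP$ and $I$ is an interval in $[0,\infty)$ (closed, open, or half-open; unbounded intervals allowed). The continuous semantics, for a path $X(\omega)$ ($\omega$ fixed) and $t\geq0$: $X(\omega),t\models a$ iff $X_t(\omega)\in B_a$; $X(\omega),t\models\lnot\phi$ iff not $X(\omega),t\models\phi$; $X(\omega),t\models\phi_1\wedge\phi_2$ iff both $X(\omega),t\models\phi_1$ and $X(\omega),t\models\phi_2$; $X(\omega),t\models\phi_1\mathcal{U}_I\phi_2$ iff there exists $s\in I$ such that $X(\omega),t+s\models\phi_2$ and for all $s'\in[t,t+s)$, $X(\omega),s'\models\phi_1$. A probability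 space is complete if every subset of a null set is measurable. *)

(* Defs.v *)
From HB Require Import structures.
From mathcomp Require Import all_boot all_order all_algebra.
From mathcomp Require Import all_classical all_reals all_analysis.
Set Implicit Arguments. Unset Strict Implicit. Unset Printing Implicit Defensive.
Import Order.TTheory GRing.Theory Num.Theory.
Local Open Scope classical_set_scope.
Local Open Scope ring_scope.

Definition borel_of (E : ptopologicalType) := g_sigma_algebraType (@open E).

Definition polish_space (R : realType) (E : ptopologicalType) : Prop :=
  (exists D : set E, countable D /\ dense D) /\
  exists dist : E -> E -> R,
    (forall x y, 0 <= dist x y) /\
        (forall x y, dist x y = 0 <-> x = y) /\
        (forall x y, dist x y = dist y x) /\
        (forall x y z, dist x z <= dist x y + dist y z) /\
        (forall A : set E, open A <->
            (forall x, A x -> exists e : R, 0 < e /\ [set y | dist x y < e] `<=` A)) /\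
        (forall u : nat -> E,
            (forall e : R, 0 < e -> exists N, forall m n, (N <= m)%N -> (N <= n)%N ->
               dist (u m) (u n) < e) ->
            exists x : E, u @ \oo --> x).

Inductive mtl (AP : Type) (R : realType) : Type :=
| MAtom of AP
| MAnd of mtl AP R & mtl AP R
| MNot of mtl AP R
| MUntil of interval R & mtl AP R & mtl AP R.

Fixpoint mtl_wf (AP : Type) (R : realType) (phi : mtl AP R) : Prop :=
  match phi with
  | MAtom _ => True
  | MAnd p q => mtl_wf p /\ mtl_wf q
  | MNot p => mtl_wf p
  | MUntil J p q => (forall s : R, s \in J -> 0 <= s) /\ mtl_wf p /\ mtl_wf q
  end.

Fixpoint mtl_sat (AP : Type) (R : realType) (E : Type) (B : AP -> set E)
    (x : R -> E) (phi : mtl AP R) (t : R) : Prop :=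
  match phi with
  | MAtom a => B a (x t)
  | MAnd p q => mtl_sat B x p t /\ mtl_sat B x q t
  | MNot p => ~ mtl_sat B x p t
  | MUntil J p q =>
      exists s, s \in J /\ mtl_sat B x q (t + s) /\
        (forall s', t <= s' -> s' < t + s -> mtl_sat B x p s')
  end.

(* Main.v *)
Require Import Defs.
From HB Require Import structures.
From mathcomp Require Import all_boot all_order all_algebra.
From mathcomp Require Import all_classical all_reals all_analysis.
Import Order.TTheory GRing.Theory Num.Theory.
Local Open Scope classical_set_scope.
Local Open Scope ring_scope.

From mathcomp Require Import measurable_realfun lra.

Set Implicit Arguments. Unset Strict Implicit. Unset Printing Implicit Defensive.

Lemma mkseqSl (T : Type) (f : nat -> T) n :
  mkseq f n.+1 = f 0%N :: mkseq (fun i => f i.+1) n.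
Proof.
elim: n => [//|n IH]; by rewrite mkseqS IH /= -mkseqS.
Qed.

Lemma map_iota1 (T : Type) (g : nat -> T) n :
  [seq g i | i <- iota 1 n] = mkseq (fun i => g i.+1) n.
Proof. by rewrite /mkseq -[1%N]addn0 iotaDl -map_comp. Qed.

Lemma eq_mkseq_in (T : Type) (f g : nat -> T) n :
  (forall i, (i < n)%N -> f i = g i) -> mkseq f n = mkseq g n.
Proof. by move=> h; apply/eq_in_map => i; rewrite mem_iota add0n => /h. Qed.

Definition pr (k n : nat) : nat := (2 ^ k * n.*2.+1).-1.

Lemma pr_surj m : exists kn : nat * nat, pr kn.1 kn.2 = m.
Proof.
have [q cq Hq] := @pfactor_coprime 2 m.+1 isT isT.
exists (logn 2 m.+1, q./2) => /=; rewrite /pr.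
have oq : odd q by rewrite -coprime2n.
have -> : (q./2).*2.+1 = q by rewrite -[RHS]odd_double_half oq add1n.
by rewrite mulnC -Hq.
Qed.

Lemma pr_inj k n k' n' : pr k n = pr k' n' -> k = k' /\ n = n'.
Proof.
rewrite /pr => h.
have h2 : (2 ^ k * n.*2.+1 = 2 ^ k' * n'.*2.+1)%N.
  have p1 : (0 < 2 ^ k * n.*2.+1)%N by rewrite muln_gt0 expn_gt0.
  have p2 : (0 < 2 ^ k' * n'.*2.+1)%N by rewrite muln_gt0 expn_gt0.
  by rewrite -(prednK p1) -(prednK p2) h.
have lg : forall a b, logn 2 (2 ^ a * b.*2.+1) = a.
  move=> a b; rewrite lognM ?expn_gt0 // pfactorK // logn_coprime ?addn0 //.
  by rewrite coprime2n /= odd_double.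
have kk : k = k' by rewrite -(lg k n) -(lg k' n') h2.
split => //; subst k'.
move/eqP: h2; rewrite eqn_pmul2l ?expn_gt0 //= => /eqP [].
exact: double_inj.
Qed.

Definition dec (m : nat) : nat * nat := projT1 (cid (pr_surj m)).
Lemma decK m : pr (dec m).1 (dec m).2 = m.
Proof. by rewrite /dec; case: cid. Qed.
Lemma prK k n : dec (pr k n) = (k, n).
Proof.
have := decK (pr k n); case: (dec (pr k n)) => a b /= /pr_inj [-> ->] //.
Qed.
Lemma pr_mono k i n : (i <= n)%N -> (pr k i <= pr k n)%N.
Proof.
move=> le; rewrite /pr -!subn1 leq_sub2r // leq_mul2l ltnS leq_double le orbT //.
Qed.

Section souslin.
Variable X : Type.

Definition souslin (K : set (set X)) (A : set X) :=
  exists C : seq nat -> set X, (forall s, K (C s)) /\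
    A = [set x | exists f : nat -> nat, forall n, C (mkseq f n.+1) x].

Lemma souslin_sub K A : K A -> souslin K A.
Proof.
move=> KA; exists (fun _ => A); split => //.
apply/seteqP; split => x /=; first by move=> Ax; exists (fun=> 0%N).
by case=> f /(_ 0%N).
Qed.

Lemma souslin_bigcup K (F : nat -> set X) : K set0 ->
  (forall k, souslin K (F k)) -> souslin K (\bigcup_k F k).
Proof.
move=> K0 sF.
have [C HC] := boolp.choice sF.
pose C' (s : seq nat) : set X := if s is x :: r then
  (if (unpickle x : option (nat * nat)) is Some (k, j) then C k (j :: r) else set0)
  else set0.
exists C'; split.
  move=> [|x r] //=; case: (unpickle x) => [[k j]|] //; exact: (HC k).1.
apply/seteqP; split => x /=.
- move=> [k _]; rewrite (HC k).2 => -[f Hf].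
  exists (fun i => if i is i'.+1 then f i'.+1 else pickle (k, f 0%N)) => n.
  rewrite pickleK map_iota1; have := Hf n; by rewrite mkseqSl.
- move=> [f Hf]; have := Hf 0%N; rewrite /C' /=.
  case E : (unpickle (f 0%N)) => [[k j]|] // _.
  exists k => //; rewrite (HC k).2.
  exists (fun i => if i is i'.+1 then f i'.+1 else j) => n.
  have := Hf n; by rewrite !mkseqSl /= E map_iota1.
Qed.

Lemma souslin_bigcap K (F : nat -> set X) :
  (forall k, souslin K (F k)) -> souslin K (\bigcap_k F k).
Proof.
move=> sF.
have [C HC] := boolp.choice sF.
pose C' (s : seq nat) : set X :=
  C (dec (size s).-1).1 (mkseq (fun i => nth 0%N s (pr (dec (size s).-1).1 i))
                           (dec (size s).-1).2.+1).
exists C'; split; first by move=> s; exact: (HC _).1.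
apply/seteqP; split => x /=.
- move=> Hx.
  have : forall k, exists g : nat -> nat, forall n, C k (mkseq g n.+1) x.
    by move=> k; have := Hx k I; rewrite (HC k).2.
  move=> /boolp.choice [g Hg].
  exists (fun m => g (dec m).1 (dec m).2) => m.
  rewrite /C' size_mkseq /=.
  set k := (dec m).1; set n := (dec m).2.
  suff -> : mkseq (fun i => nth 0%N (mkseq (fun m0 => g (dec m0).1 (dec m0).2) m.+1) (pr k i)) n.+1
         = mkseq (g k) n.+1 by exact: Hg.
  apply: eq_mkseq_in => i ilt /=.
  have hm : pr k n = m by rewrite /k /n decK.
  rewrite nth_mkseq ?prK // ltnS -hm; exact: pr_mono.
- move=> [f Hf] k _; rewrite (HC k).2.
  exists (fun i => f (pr k i)) => n.
  have := Hf (pr k n); rewrite /C' size_mkseq /= prK /=.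
  suff -> : mkseq (fun i => nth 0%N (mkseq f (pr k n).+1) (pr k i)) n.+1
    = mkseq (fun i => f (pr k i)) n.+1 by [].
  apply: eq_mkseq_in => i ilt; rewrite nth_mkseq // ltnS; exact: pr_mono.
Qed.
End souslin.

Section marczewski.
Context d (T : measurableType d) (R : realType) (P : probability T R).
Hypothesis Pc : measure_is_complete P.
Local Open Scope ereal_scope.

Lemma Pfin (A : set T) : measurable A -> P A \is a fin_num.
Proof. by move=> mA; apply: fin_num_measure. Qed.

Lemma envelope (Z : set T) : exists G, [/\ measurable G, Z `<=` G &
  forall G', measurable G' -> Z `<=` G' -> P (G `\` G') = 0].
Proof.
pose S := [set P G | G in [set G | measurable G /\ Z `<=` G]].
pose m := ereal_inf S.
have m0 : 0 <= m by apply/ereal_infP => _ [G _ <-]; exact: measure_ge0.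
have m1 : m <= 1.
  by apply: ge_ereal_inf; exists (P setT) => //; [exists setT | rewrite probability_setT].
have mfin : m \is a fin_num by rewrite ge0_fin_numE // (le_lt_trans m1) // ltey.
have : forall n : nat, exists G, [/\ measurable G, Z `<=` G & P G < m + (n.+1%:R^-1)%:E].
  move=> n; have e0 : (0 < n.+1%:R^-1 :> R)%R by rewrite invr_gt0.
  have [x [G [mG ZG] <-] Gm] := lb_ereal_inf_adherent e0 mfin.
  by exists G.
move=> /boolp.choice [Gn HGn].
exists (\bigcap_n Gn n); split.
- by apply: bigcapT_measurable => n; case: (HGn n).
- by move=> z Zz n _; case: (HGn n) => _ /(_ z Zz).
move=> G' mG' ZG'.
have mG : measurable (\bigcap_n Gn n) by apply: bigcapT_measurable => n; case: (HGn n).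
have PGm : P (\bigcap_n Gn n) <= m.
  apply/lee_addgt0Pr => e e0.
  have me : (fine m < fine m + e)%R by rewrite ltrDl.
  have [k hk] := ltr_add_invr me.
  case: (HGn k) => mGk _ Pk.
  apply: le_trans (le_measure _ _ _ _) _.
  - by rewrite inE.
  - by rewrite inE; exact: mGk.
  - by apply: bigcap_inf.
  apply: (le_trans (ltW Pk)).
  rewrite -(fineK mfin) -EFinD lee_fin.
  exact: ltW hk.
have ZG : Z `<=` \bigcap_n Gn n by move=> z Zz n _; case: (HGn n) => _ /(_ z Zz).
set G := \bigcap_n Gn n in mG ZG PGm *.
have Hm : m <= P (G `&` G').
  apply: ereal_inf_lbound; exists (G `&` G') => //; split; first exact: measurableI.
  by move=> z Zz; split; [exact: ZG | exact: ZG'].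
have E := measureDI P mG mG'.
apply/eqP; rewrite -measure_le0.
have fa := Pfin (measurableD mG mG'); have fb := Pfin (measurableI _ _ mG mG').
have a0 := measure_ge0 P (G `\` G').
have : P (G `\` G') + P (G `&` G') <= P (G `&` G').
  by rewrite -E; exact: le_trans PGm Hm.
rewrite -(fineK fa) -(fineK fb) -EFinD !lee_fin => h.
suff : (fine (P (G `\` G')) <= 0)%R by rewrite -lee_fin fineK.
lra.
Qed.
Lemma souslin_meas (A : set T) : souslin measurable A -> measurable A.
Proof.
move=> [C [mC ->]]; set A' := [set x | _].
pose As (s : seq nat) := [set x | exists f : nat -> nat,
  mkseq f (size s) = s /\ forall n, C (mkseq f n.+1) x].
have /boolp.choice [G0 HG0] := fun s => envelope (As s).
pose Gs (s : seq nat) := if s is [::] then G0 s else G0 s `&` C s.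
have mGs s : measurable (Gs s).
  case: s => [|a r]; first by case: (HG0 [::]).
  by apply: measurableI; [case: (HG0 (a :: r))|exact: mC].
have AGs s : As s `<=` Gs s.
  case: s => [|a r] x Ax; first by case: (HG0 [::]) => _ /(_ x Ax).
  split; first by case: (HG0 (a :: r)) => _ /(_ x Ax).
  by case: Ax => f [fs /(_ (size r)) h]; rewrite -fs.
have nGs s G' : measurable G' -> As s `<=` G' -> P (Gs s `\` G') = 0.
  move=> mG' AG'; case: (HG0 s) => mG0 _ /(_ G' mG' AG') h.
  apply/eqP; rewrite -measure_le0 -h; apply: le_measure.
  - by rewrite inE; apply: measurableD.
  - by rewrite inE; apply: measurableD => //; case: (HG0 s).
  - by move=> y [Gy nG'y]; split => //; move: Gy; case: (s) => //= ? ? [].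
have Asplit s : As s `<=` \bigcup_k Gs (rcons s k).
  move=> x [f [fs Hf]]; exists (f (size s)) => //; apply: AGs.
  by exists f; split => //; rewrite size_rcons mkseqS fs.
pose Bad s := Gs s `\` \bigcup_k Gs (rcons s k).
have Bad0 s : P (Bad s) = 0.
  by apply: nGs (Asplit s); apply: bigcupT_measurable => k.
have key : Gs [::] `\` A' `<=`
    \bigcup_n Bad (odflt [::] (unpickle n : option (seq nat))).
  move=> x [Gx nAx]; apply: boolp.contrapT => hx.
  have : forall s, exists k, Gs s x -> Gs (rcons s k) x.
    move=> s; have [Gsx|nGsx] := boolp.pselect (Gs s x); last by exists 0%N.
    apply: boolp.contrapT => nk; apply: hx; exists (pickle s) => //; rewrite pickleK /=.
    split => // -[k _ Hk]; apply: nk; exists k => _; exact: Hk.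
  move=> /boolp.choice [nxt Hnxt].
  pose sq := fix sq n := if n is n'.+1 then rcons (sq n') (nxt (sq n')) else [::].
  pose f n := nxt (sq n).
  have sqE n : sq n = mkseq f n.
    by elim: n => // n IH; rewrite mkseqS -IH.
  have sqG n : Gs (sq n) x by elim: n => // n IH; exact: Hnxt.
  apply: nAx; exists f => n; have := sqG n.+1; rewrite sqE mkseqSl /= => -[].
  by rewrite -mkseqSl.
have negl : P.-negligible (Gs [::] `\` A').
  apply: (@negligibleS _ _ _ P _ _ key); apply: (@negligible_bigcup _ _ _ P) => n.
  exists (Bad (odflt [::] (unpickle n : option (seq nat)))); split; [|exact: Bad0|by move=> ?].
  by rewrite /Bad; apply: measurableD => //; exact: bigcupT_measurable.
have mD := Pc negl.
have AG : A' `<=` Gs [::].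
  by move=> x [f Hf]; apply: AGs; exists f; split.
rewrite -(setIidr AG) -setDD; exact: measurableD.
Qed.
End marczewski.

Lemma take_mkseq (U : Type) (f : nat -> U) k n : (k <= n)%N ->
  take k (mkseq f n) = mkseq f k.
Proof. by move=> kn; rewrite /mkseq -map_take take_iota (minn_idPl kn). Qed.

Lemma nat_ub (R : realType) (y : R) : exists n : nat, y <= n%:R.
Proof.
exists (Num.bound `|y|); apply: (le_trans (ler_norm y)).
by apply: ltW; apply: archi_boundP.
Qed.

Section krect.
Context d (T : measurableType d) (R : realType).

Definition Krect : set (set (T * R)) :=
  [set Z | exists A (a b : R), measurable A /\ Z = A `*` [set x | a <= x <= b]].

Lemma Krect0 : Krect set0.
Proof. by exists set0, 0, 0; split => //; rewrite set0X. Qed.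

Lemma souslin_setU (A B : set (T * R)) :
  souslin Krect A -> souslin Krect B -> souslin Krect (A `|` B).
Proof.
move=> sA sB; rewrite -bigcup2E; apply: souslin_bigcup; first exact: Krect0.
by move=> [|[|n]] //=; apply: souslin_sub; exact: Krect0.
Qed.

Lemma souslin_rect_open (B : set T) (U : set R) : measurable B ->
  (forall x, U x -> exists q r : rat, ratr q <= x <= ratr r /\
     [set y | ratr q <= y <= ratr r] `<=` U) ->
  souslin Krect (B `*` U).
Proof.
move=> mB hU.
pose F (n : nat) : set (T * R) := if (unpickle n : option (rat * rat)) is Some (q, r) then
  (if boolp.pselect ([set y | ratr q <= y <= ratr r] `<=` U) is left _ then
     B `*` [set y : R | ratr q <= y <= ratr r] else set0) else set0.
suff -> : B `*` U = \bigcup_n F n.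
  apply: souslin_bigcup; first exact: Krect0.
  move=> n; apply: souslin_sub; rewrite /F.
  case: (unpickle n) => [[q r]|]; last exact: Krect0.
  case: boolp.pselect => _; last exact: Krect0.
  by exists B, (ratr q), (ratr r).
apply/seteqP; split => -[w x] /=.
- move=> [Bw Ux]; have [q [r [qr sub]]] := hU x Ux.
  exists (pickle (q, r)); first by [].
  rewrite /F pickleK.
  by case: boolp.pselect.
- move=> [n _]; rewrite /F; case: (unpickle n) => [[q r]|] //.
  by case: boolp.pselect => // sub [/= Bw xqr]; split => //; exact: sub.
Qed.

Lemma rat_around (x : R) : exists q r : rat, ratr q < x < ratr r.
Proof.
have h1 : x - 1 < x by lra.
have h2 : x < x + 1 by lra.
have [q] := rat_in_itvoo h1; rewrite in_itv /= => /andP[_ qx].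
have [r] := rat_in_itvoo h2; rewrite in_itv /= => /andP[xr _].
by exists q, r; rewrite qx xr.
Qed.

Lemma souslin_Kcompl (A : set T) (a b : R) : measurable A ->
  souslin Krect (~` (A `*` [set x | a <= x <= b])).
Proof.
move=> mA.
have -> : ~` (A `*` [set x | a <= x <= b]) =
  ((~` A) `*` setT) `|` (setT `*` [set x | x < a]) `|` (setT `*` [set x | b < x]).
  apply/seteqP; split => -[w x] /=.
  - move=> h; have [Aw|nAw] := boolp.pselect (A w); last by left; left.
    case: (ltP x a) => xa; first by left; right.
    case: (ltP b x) => bx; first by right.
    by exfalso; apply: h; split => //; rewrite xa bx.
  - by move=> [[[nA _]|[_ xa]]|[_ bx]] [Aw /andP[ax xb]]; [exact: nA| lra | lra].
apply: souslin_setU; first apply: souslin_setU.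
- apply: souslin_rect_open; first exact: measurableC.
  move=> x _; have [q [r /andP[qx xr]]] := rat_around x.
  by exists q, r; split => //; rewrite (ltW qx) (ltW xr).
- apply: souslin_rect_open => // x xa.
  have [q [_ /andP[qx _]]] := rat_around x.
  have [r] := rat_in_itvoo xa; rewrite in_itv /= => /andP[xr ra].
  exists q, r; split; first by rewrite (ltW qx) (ltW xr).
  by move=> y /andP[_ yr] /=; exact: le_lt_trans yr ra.
- apply: souslin_rect_open => // x bx.
  have [_ [r /andP[_ xr]]] := rat_around x.
  have [q] := rat_in_itvoo bx; rewrite in_itv /= => /andP[bq qx].
  exists q, r; split; first by rewrite (ltW qx) (ltW xr).
  by move=> y /andP[qy _] /=; exact: lt_le_trans bq qy.
Qed.

Definition Gsig : set (set (T * R)) :=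
  [set Z | souslin Krect Z /\ souslin Krect (~` Z)].

Lemma Gsig_sigma : sigma_algebra setT Gsig.
Proof.
split.
- split; first by apply: souslin_sub; exact: Krect0.
  rewrite setC0 -setXTT; apply: souslin_rect_open => // x _.
  have [q [r /andP[qx xr]]] := rat_around x.
  by exists q, r; split => //; rewrite (ltW qx) (ltW xr).
- by move=> Z [s1 s2]; rewrite setTD; split => //; rewrite setCK.
- move=> F HF; split; first by apply: souslin_bigcup; [exact: Krect0|move=> n; case: (HF n)].
  by rewrite setC_bigcup; apply: souslin_bigcap => n; case: (HF n).
Qed.

Lemma Krect_Gsig Z : Krect Z -> Gsig Z.
Proof.
move=> KZ; split; first exact: souslin_sub.
by case: KZ => A [a [b [mA ->]]]; exact: souslin_Kcompl.
Qed.

Lemma Gsig_bigcup (F : nat -> set (T * R)) : (forall n, Gsig (F n)) -> Gsig (\bigcup_n F n).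
Proof. by case: Gsig_sigma => _ _; apply. Qed.

Lemma Gsig_C Z : Gsig Z -> Gsig (~` Z).
Proof. by move=> [s1 s2]; split => //; rewrite setCK. Qed.

Lemma Gsig_I Z1 Z2 : Gsig Z1 -> Gsig Z2 -> Gsig (Z1 `&` Z2).
Proof.
move=> g1 g2; rewrite -[Z1 `&` Z2]setCK setCI; apply: Gsig_C.
rewrite -bigcup2E; apply: Gsig_bigcup => -[|[|n]] /=; try exact: Gsig_C.
by apply: Krect_Gsig; exact: Krect0.
Qed.

Lemma Gsig_XT (A : set T) : measurable A -> Gsig (A `*` setT).
Proof.
move=> mA.
have -> : A `*` setT = \bigcup_n (A `*` [set x : R | - n%:R <= x <= n%:R]).
  apply/seteqP; split => -[w x] /=.
  - move=> [Aw _]; have [n hn] := nat_ub `|x|.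
    exists n => //; split => //=; rewrite -ler_norml; exact: hn.
  - by move=> [n _ [Aw _]].
apply: Gsig_bigcup => n; apply: Krect_Gsig; by exists A, (- n%:R), n%:R.
Qed.

Lemma measurable_Gsig (Z : set (T * R)) : measurable Z -> Gsig Z.
Proof.
rewrite measurable_prod_measurableType => mZ.
apply: (smallest_sub (@Gsig_sigma) _ mZ).
move=> _ [A mA [B mB <-]].
pose H := [set B : set R | Gsig (A `*` B)].
have sH : sigma_algebra setT H.
  split.
  - by rewrite /H /= setX0; apply: Krect_Gsig; exact: Krect0.
  - move=> B' HB'; rewrite /H /=.
    have -> : A `*` (setT `\` B') = (A `*` setT) `&` ~` (A `*` B').
      apply/seteqP; split => -[w x] /=.
      + by move=> [Aw [_ nB]]; split => // -[].
      + by move=> [[Aw _] h]; split => //; split => // Bx; apply: h.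
    apply: Gsig_I; first exact: Gsig_XT.
    exact: Gsig_C.
  - move=> F HF; rewrite /H /= setX_bigcupr; exact: Gsig_bigcup.
have E := f_equal (fun M => M B) (measurable_realfun.RGenCInfty.measurableE R).
have hB := eq_rect _ (fun P : Prop => P) mB _ E.
apply: (smallest_sub sH _ hB) => _ [x ->]; rewrite /H /=.
have -> : A `*` `[x, +oo[%classic = \bigcup_n (A `*` [set y : R | x <= y <= x + n%:R]).
  apply/seteqP; split => -[w y] /=.
  - rewrite in_itv /= andbT => -[Aw xy]; have [n hn] := nat_ub (y - x).
    by exists n => //; split => //=; rewrite xy /=; lra.
  - by move=> [n _ [Aw /andP[xy _]]]; split => //; rewrite in_itv /= xy.
apply: Gsig_bigcup => n; apply: Krect_Gsig; by exists A, x, (x + n%:R).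
Qed.

End krect.

Section proj.
Context d (T : measurableType d) (R : realType).

Lemma proj_souslin (Z : set (T * R)) : souslin (@Krect d T R) Z ->
  souslin measurable (fst @` Z).
Proof.
move=> [C [KC ->]].
have /boolp.choice [ab Hab] : forall s, exists t : set T * (R * R),
    measurable t.1 /\ C s = t.1 `*` [set x | t.2.1 <= x <= t.2.2].
  by move=> s; case: (KC s) => A [a [b [mA ->]]]; exists (A, (a, b)).
pose A s := (ab s).1; pose a s := (ab s).2.1; pose b s := (ab s).2.2.
have CE s : C s = A s `*` [set x | a s <= x <= b s] := (Hab s).2.
have mA s : measurable (A s) := (Hab s).1.
pose E (s : seq nat) : set T := [set w | forall i j, (i < size s)%N -> (j < size s)%N ->
  A (take i.+1 s) w /\ a (take i.+1 s) <= b (take j.+1 s)].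
exists E; split.
- move=> s.
  pose Q := forall i j, (i < size s)%N -> (j < size s)%N -> a (take i.+1 s) <= b (take j.+1 s).
  have -> : E s = (\bigcap_i (if (i < size s)%N then A (take i.+1 s) else setT)) `&` [set _ | Q].
    apply/seteqP; split => w /=.
    + move=> h; split; last by move=> i j hi hj; exact: (h i j hi hj).2.
      by move=> i _; case: ifPn => // his; exact: (h i i his his).1.
    + move=> [h1 h2] i j hi hj; split; last exact: h2.
      by have := h1 i I; rewrite hi.
  apply: measurableI.
    by apply: bigcapT_measurable => i; case: ifPn => _.
  case: (boolp.pselect Q) => hQ.
    by have -> : [set _ : T | Q] = setT by apply/seteqP; split.
  by have -> : [set _ : T | Q] = set0 by apply/seteqP; split.
- apply/seteqP; split.
  + move=> _ [p [f Hf] <-]; exists f => n i j hi hj.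
    rewrite size_mkseq in hi hj; rewrite !take_mkseq //.
    have := Hf i; have := Hf j; rewrite !CE; case: p {Hf} => w x /=.
    by move=> [_ /andP[_ xb]] [Aw /andP[ax _]]; split => //; exact: le_trans ax xb.
  + move=> w [f Hf].
    pose alpha n := a (mkseq f n.+1). pose beta n := b (mkseq f n.+1).
    have hab i j : alpha i <= beta j.
      have := Hf (maxn i j) i j; rewrite size_mkseq !ltnS leq_maxl leq_maxr.
      by rewrite !take_mkseq ?ltnS ?leq_maxl ?leq_maxr // => /(_ isT isT) [].
    have hA n : A (mkseq f n.+1) w.
      by have := Hf n n n; rewrite size_mkseq ltnS leqnn take_mkseq // => /(_ isT isT) [].
    pose S := range alpha.
    have S0 : S !=set0 by exists (alpha 0%N); exists 0%N.
    have Sub : ubound S (beta 0%N) by move=> _ [n _ <-]; exact: hab.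
    exists (w, sup S) => //; exists f => n; rewrite CE; split => //=; apply/andP; split.
    * by apply: sup_upper_bound; [split => //; exists (beta 0%N) | exists n].
    * by apply: ge_sup => // _ [m _ <-]; exact: hab.
Qed.

Lemma proj_measurable (P : probability T R) : measure_is_complete P ->
  forall Z : set (T * R), measurable Z -> measurable (fst @` Z).
Proof.
move=> Pc Z mZ; apply: (souslin_meas Pc); apply: proj_souslin.
by case: (measurable_Gsig mZ).
Qed.

End proj.

Section hit.
Context d (T : measurableType d) (R : realType) (P : probability T R).
Hypothesis Pc : measure_is_complete P.

Lemma meas_lt (c : R) : measurable [set x : R | x < c].
Proof.
have -> : [set x : R | x < c] = `]-oo, c[%classic.
  by apply/seteqP; split => x; rewrite /= in_itv.
exact: measurable_itv.
Qed.

Lemma meas_oo (a c : R) : measurable [set x : R | a < x < c].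
Proof.
have -> : [set x : R | a < x < c] = `]a, c[%classic.
  by apply/seteqP; split => x; rewrite /= in_itv.
exact: measurable_itv.
Qed.

Definition qof (n : nat) : rat := odflt 0 (unpickle n : option rat).

Lemma L1 (S : set (T * R)) (c : R) : measurable S ->
  measurable [set p : T * R | exists v, S (p.1, v) /\ p.2 <= v /\ v < c].
Proof.
move=> mS.
have -> : [set p : T * R | exists v, S (p.1, v) /\ p.2 <= v /\ v < c] =
  (S `&` (setT `*` [set x | x < c])) `|`
  \bigcup_n ((fst @` (S `&` (setT `*` [set x | ratr (qof n) < x < c]))) `*`
             [set x | x < ratr (qof n)]).
  apply/seteqP; split => -[w x] /=.
  - move=> [v [Sv [xv vc]]].
    have [xev|xltv] := eqVneq x v.
      by left; split; [rewrite xev | split => //=; rewrite xev].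
    have xv' : x < v by rewrite lt_neqAle xltv xv.
    have [q] := rat_in_itvoo xv'; rewrite in_itv /= => /andP[xq qv].
    right; exists (pickle q); first by [].
    have qq : qof (pickle q) = q by rewrite /qof pickleK.
    split => /=; last by rewrite qq.
    exists (w, v) => //; split => //; split => //=.
    by rewrite qq qv vc.
  - move=> [[Sx [_ /= xc]]|[n _ [[[w' v] [Sv [_ /= /andP[qv vc]]] /= <-] xq]]].
      by exists x; split => //; split.
    exists v; split => //; split => //.
    exact: ltW (lt_trans xq qv).
apply: measurableU.
  by apply: measurableI => //; apply: measurableX => //; exact: meas_lt.
apply: bigcupT_measurable => n; apply: measurableX; last exact: meas_lt.
apply: (proj_measurable Pc); apply: measurableI => //.
by apply: measurableX => //; exact: meas_oo.
Qed.

Definition hit (S : set (T * R)) (p : T * R) : \bar R :=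
  ereal_inf [set v%:E | v in [set v | S (p.1, v) /\ p.2 <= v]].

Lemma hit_lt (S : set (T * R)) p (r : \bar R) :
  (hit S p < r)%E <-> exists v, [/\ S (p.1, v), p.2 <= v & (v%:E < r)%E].
Proof.
split.
- by move=> /ereal_inf_lt [_ [v [Sv pv] <-] vr]; exists v.
- move=> [v [Sv pv vr]]; apply: le_lt_trans vr.
  by apply: ereal_inf_lbound; exists v.
Qed.

Lemma hit_lb (S : set (T * R)) p : (p.2%:E <= hit S p)%E.
Proof. by apply/ereal_infP => _ [v [_ pv] <-]; rewrite lee_fin. Qed.

Lemma hit_le (S : set (T * R)) p v : S (p.1, v) -> p.2 <= v -> (hit S p <= v%:E)%E.
Proof. by move=> Sv pv; apply: ereal_inf_lbound; exists v. Qed.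

Lemma hit_measurable (S : set (T * R)) : measurable S -> measurable_fun [set: T * R] (hit S).
Proof.
move=> mS; apply: (measurability _ (ErealGenInftyO.measurableE R)).
move=> _ [_ [r ->] <-].
have -> : setT `&` hit S @^-1` `]-oo, r%:E[%classic =
    [set p : T * R | exists v, S (p.1, v) /\ p.2 <= v /\ v < r].
  apply/seteqP; split => p /=.
  - rewrite in_itv /= => -[_ /hit_lt [v [Sv pv vr]]]; exists v; split => //; split => //.
  - move=> [v [Sv [pv vr]]]; split => //; rewrite in_itv /=; apply/hit_lt.
    by exists v; split => //; rewrite lte_fin.
exact: L1.
Qed.

Lemma G0 (S : set (T * R)) (lo : T * R -> R) (hi : T * R -> \bar R) :
  measurable S -> measurable_fun [set: T * R] lo -> measurable_fun [set: T * R] hi ->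
  measurable [set p | exists v, [/\ S (p.1, v), lo p <= v & (v%:E <= hi p)%E]].
Proof.
move=> mS mlo mhi.
pose h p := hit S (p.1, lo p).
have mh : measurable_fun [set: T * R] h.
  apply: measurableT_comp; first exact: hit_measurable.
  by apply: measurable_fun_pair => //; exact: measurable_fst.
have mg : measurable_fun [set: T * R] (fun p : T * R => (p.1, fine (h p))).
  apply: measurable_fun_pair; first exact: measurable_fst.
  apply: measurableT_comp => //; exact: measurable_realfun.fine_measurable.
have -> : [set p | exists v, [/\ S (p.1, v), lo p <= v & (v%:E <= hi p)%E]] =
   (setT `&` [set p | (h p < hi p)%E]) `|`
   ((setT `&` [set p | h p \is a fin_num]) `&` ((setT `&` [set p | (h p <= hi p)%E]) `&`
     (setT `&` (fun p => (p.1, fine (h p))) @^-1` S))).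
  apply/seteqP; split => p /=.
  - move=> [v [Sv lov vhi]].
    have hv : (h p <= v%:E)%E by apply: hit_le.
    have [hlt|hge] := ltP (h p) (hi p); first by left.
    have hE : h p = v%:E by apply/eqP; rewrite eq_le hv (le_trans vhi hge).
    by right; rewrite hE; split => //; split => //; rewrite -hE.
  - move=> [[_ /hit_lt [v [Sv lov vhi]]]|[[_ hfin] [[_ hhi] [_ Sh]]]].
      by exists v; split => //; apply: ltW.
    exists (fine (h p)); split => //; last by rewrite fineK.
    by rewrite -lee_fin fineK //; exact: (hit_lb S (p.1, lo p)).
apply: measurableU; first exact: measurable_lte.
apply: measurableI; first exact: measurable_realfun.emeasurable_fin_num.
apply: measurableI; first exact: measurable_lee.
exact: mg.
Qed.

Lemma G0e (S : set (T * R)) (lo hi : T * R -> \bar R) :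
  measurable S -> measurable_fun [set: T * R] lo -> measurable_fun [set: T * R] hi ->
  measurable [set p | exists v, [/\ S (p.1, v), (lo p <= v%:E)%E & (v%:E <= hi p)%E]].
Proof.
move=> mS mlo mhi.
have -> : [set p | exists v, [/\ S (p.1, v), (lo p <= v%:E)%E & (v%:E <= hi p)%E]] =
  \bigcup_n ((setT `&` [set p | (lo p < +oo)%E]) `&`
    [set p | exists v, [/\ S (p.1, v), fine (maxe (lo p) (- n%:R)%:E) <= v & (v%:E <= hi p)%E]]).
  apply/seteqP; split => p /=.
  - move=> [v [Sv lov vhi]].
    have [n hn] := nat_ub (- v).
    have mv : (maxe (lo p) (- n%:R)%:E <= v%:E)%E.
      by rewrite ge_max lov /= lee_fin; lra.
    have mfin : maxe (lo p) (- n%:R)%:E \is a fin_num.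
      rewrite fin_numElt; apply/andP; split.
        have hm : ((- n%:R)%:E <= maxe (lo p) (- n%:R)%:E)%E by rewrite le_max lexx orbT.
        by apply: (lt_le_trans _ hm); rewrite ltNye.
      by apply: (le_lt_trans mv); rewrite ltey.
    exists n => //; split; first by split => //; apply: (le_lt_trans lov); rewrite ltey.
    by exists v; split => //; rewrite -lee_fin fineK.
  - move=> [n _ [[_ loy] [v [Sv mv vhi]]]]; exists v; split => //.
    have mfin : maxe (lo p) (- n%:R)%:E \is a fin_num.
      rewrite fin_numElt; apply/andP; split.
        have hm : ((- n%:R)%:E <= maxe (lo p) (- n%:R)%:E)%E by rewrite le_max lexx orbT.
        by apply: (lt_le_trans _ hm); rewrite ltNye.
      by rewrite gt_max loy ltey.
    have hm : (lo p <= maxe (lo p) (- n%:R)%:E)%E by rewrite le_max lexx.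
    apply: (le_trans hm).
    by rewrite -(fineK mfin) lee_fin.
apply: bigcupT_measurable => n; apply: measurableI.
  exact: emeasurable_fun_infty_o.
apply: G0 => //; apply: measurableT_comp; first exact: fine_measurable.
by apply: measurable_maxe => //; exact: measurable_cst.
Qed.

Lemma eps_lt (x : \bar R) (v : R) :
  (x < v%:E)%E <-> exists n : nat, (x + (n.+1%:R^-1)%:E <= v%:E)%E.
Proof.
case: x => [r| |] /=.
- rewrite lte_fin; split.
    by move=> /ltr_add_invr [k hk]; exists k; rewrite -EFinD lee_fin ltW.
  move=> [n]; rewrite -EFinD lee_fin => h; apply: lt_le_trans h.
  by rewrite ltrDl invr_gt0.
- by split => // -[n].
- by split => _; [exists 0%N; rewrite addNye leNye | exact: ltNyr].
Qed.

Lemma eps_gt (x : \bar R) (v : R) :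
  (v%:E < x)%E <-> exists n : nat, (v%:E <= x - (n.+1%:R^-1)%:E)%E.
Proof.
case: x => [r| |] /=.
- rewrite lte_fin; split.
    move=> /ltr_add_invr [k hk]; exists k; rewrite -EFinB lee_fin.
    by rewrite lerBrDr ltW.
  move=> [n]; rewrite -EFinB lee_fin lerBrDr => h; apply: lt_le_trans h.
  by rewrite ltrDl invr_gt0.
- by split => _; [exists 0%N; rewrite addye ?leey | exact: ltry].
- by split => // -[n].
Qed.

Lemma Gen (S : set (T * R)) (lo hi hi2 : T * R -> \bar R) (b1 b2 : bool) :
  measurable S -> measurable_fun [set: T * R] lo -> measurable_fun [set: T * R] hi ->
  measurable_fun [set: T * R] hi2 ->
  measurable [set p | exists v, [/\ S (p.1, v),
     (if b1 then lo p < v%:E else lo p <= v%:E)%E,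
     (if b2 then v%:E < hi p else v%:E <= hi p)%E & (v%:E <= hi2 p)%E]].
Proof.
move=> mS mlo mhi mhi2.
have base : forall lo' hi', measurable_fun [set: T * R] lo' -> measurable_fun [set: T * R] hi' ->
    measurable [set p | exists v, [/\ S (p.1, v), (lo' p <= v%:E)%E,
                                     (v%:E <= hi' p)%E & (v%:E <= hi2 p)%E]].
  move=> lo' hi' mlo' mhi'.
  have -> : [set p | exists v, [/\ S (p.1, v), (lo' p <= v%:E)%E,
                                     (v%:E <= hi' p)%E & (v%:E <= hi2 p)%E]] =
     [set p | exists v, [/\ S (p.1, v), (lo' p <= v%:E)%E & (v%:E <= mine (hi' p) (hi2 p))%E]].
    apply/seteqP; split => p /= [v h]; exists v; move: h; rewrite le_min.
      by case=> ? ? h1 h2; split => //; rewrite h1 h2.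
    by case=> ? ? /andP[? ?]; split.
  by apply: G0e => //; exact: measurable_mine.
have baseN : forall lo', measurable_fun [set: T * R] lo' ->
    measurable [set p | exists v, [/\ S (p.1, v), (lo' p <= v%:E)%E,
       (if b2 then v%:E < hi p else v%:E <= hi p)%E & (v%:E <= hi2 p)%E]].
  move=> lo' mlo'; case: b2; last exact: base.
  have -> : [set p | exists v, [/\ S (p.1, v), (lo' p <= v%:E)%E,
       (v%:E < hi p)%E & (v%:E <= hi2 p)%E]] = \bigcup_n
     [set p | exists v, [/\ S (p.1, v), (lo' p <= v%:E)%E,
       (v%:E <= hi p - (n.+1%:R^-1)%:E)%E & (v%:E <= hi2 p)%E]].
    apply/seteqP; split => p /=.
      by move=> [v [Sv l /eps_gt [n hn] h2]]; exists n => //; exists v.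
    by move=> [n _ [v [Sv l hn h2]]]; exists v; split => //; apply/eps_gt; exists n.
  apply: bigcupT_measurable => n; apply: base => //.
  by apply: emeasurable_funB => //; exact: measurable_cst.
case: b1; last exact: baseN.
have -> : [set p | exists v, [/\ S (p.1, v), (lo p < v%:E)%E,
     (if b2 then v%:E < hi p else v%:E <= hi p)%E & (v%:E <= hi2 p)%E]] = \bigcup_n
   [set p | exists v, [/\ S (p.1, v), (lo p + (n.+1%:R^-1)%:E <= v%:E)%E,
     (if b2 then v%:E < hi p else v%:E <= hi p)%E & (v%:E <= hi2 p)%E]].
  apply/seteqP; split => p /=.
    by move=> [v [Sv /eps_lt [n hn] h1 h2]]; exists n => //; exists v.
  by move=> [n _ [v [Sv hn h1 h2]]]; exists v; split => //; apply/eps_lt; exists n.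
apply: bigcupT_measurable => n; apply: baseN.
by apply: emeasurable_funD => //; exact: measurable_cst.
Qed.

End hit.

Unset Implicit Arguments. Set Strict Implicit. Set Printing Implicit Defensive.

Section itvhelp.
Variable R : realType.
Definition loE (l : itv_bound R) (t : R) : \bar R :=
  match l with BSide _ x => (t + x)%:E | BInfty b => if b then -oo%E else +oo%E end.
Definition lob (l : itv_bound R) : bool :=
  match l with BSide b _ => ~~ b | BInfty _ => false end.
Definition hiE (r : itv_bound R) (t : R) : \bar R :=
  match r with BSide _ x => (t + x)%:E | BInfty b => if b then -oo%E else +oo%E end.
Definition hib (r : itv_bound R) : bool :=
  match r with BSide b _ => b | BInfty _ => false end.

Lemma low_iff (l : itv_bound R) t u : (l <= BLeft (u - t))%O <->
  (if lob l then (loE l t < u%:E)%E else (loE l t <= u%:E)%E).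
Proof.
case: l => [b x|[]].
  rewrite leBSide /=; case: b => /=.
    by rewrite lee_fin; split => h; lra.
  by rewrite lte_fin; split => h; lra.
  by split => // _; rewrite leNye.
by rewrite /= ge_pinfty leye_eq.
Qed.

Lemma up_iff (r : itv_bound R) t u : (BRight (u - t) <= r)%O <->
  (if hib r then (u%:E < hiE r t)%E else (u%:E <= hiE r t)%E).
Proof.
case: r => [b x|[]].
  rewrite leBSide /=; case: b => /=.
    by rewrite lte_fin; split => h; lra.
  by rewrite lee_fin; split => h; lra.
  by rewrite /= le_ninfty leeNy_eq.
by split => // _; rewrite leey.
Qed.
End itvhelp.
Arguments loE {R}. Arguments lob {R}. Arguments hiE {R}. Arguments hib {R}.
Arguments low_iff {R}. Arguments up_iff {R}.


Lemma meas_ge0 (R : realType) : measurable [set t : R | 0 <= t].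
Proof.
have -> : [set t : R | 0 <= t] = `[0, +oo[%classic.
  by apply/seteqP; split => x; rewrite /= in_itv /= andbT.
exact: measurable_itv.
Qed.

Theorem theorem4p7 (R : realType) (d : measure_display) (Omega : measurableType d)
  (P : probability Omega R) (E : ptopologicalType) (X : R -> Omega -> E)
  (AP : Type) (B : AP -> set (borel_of E)) :
  measure_is_complete P ->
  polish_space R E ->
  measurable_fun ([set: Omega] `*` [set t : R | 0 <= t])
    (fun p : Omega * R => (X p.2 p.1 : borel_of E)) ->
  (forall a, measurable (B a)) ->
  forall phi : mtl AP R, mtl_wf phi ->
    measurable [set p : Omega * R | 0 <= p.2 /\ mtl_sat B (fun t => X t p.1) phi p.2]
    /\ (forall t : R, 0 <= t -> measurable [set w : Omega | mtl_sat B (fun s => X s w) phi t]).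
Proof.
move=> Pc _ mX mB.
pose Sat phi := [set p : Omega * R | 0 <= p.2 /\ mtl_sat B (fun t => X t p.1) phi p.2].
have mpos : measurable [set p : Omega * R | 0 <= p.2].
  have -> : [set p : Omega * R | 0 <= p.2] = [set: Omega] `*` [set t : R | 0 <= t].
    by apply/seteqP; split => -[w t] /=; [move=> ?; split | case].
  apply: measurableX => //; exact: meas_ge0.
suff main : forall phi, mtl_wf phi -> measurable (Sat phi).
  move=> phi wf; split; first exact: main.
  move=> t t0.
  have -> : [set w : Omega | mtl_sat B (fun s => X s w) phi t] = ysection (Sat phi) t.
    by apply/seteqP; split => w; rewrite /ysection /= in_setE /=; [move=> h; split|case].
  exact: measurable_ysection (main _ wf).
elim => [a|p IHp q IHq|p IHp|J p IHp q IHq] /= wf.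
- have -> : Sat (@MAtom AP R a) = ([set: Omega] `*` [set t : R | 0 <= t]) `&`
      ((fun p : Omega * R => (X p.2 p.1 : borel_of E)) @^-1` B a).
    by apply/seteqP; split => -[w t] /=; [move=> [t0 Ba]|move=> [[_ t0] Ba]].
  apply: mX => //; apply: measurableX => //; exact: meas_ge0.
- have -> : Sat (@MAnd AP R p q) = Sat p `&` Sat q.
    apply/seteqP; split => -[w t] /=; first by case=> t0 [hp hq].
    by case=> [[t0 hp] [_ hq]].
  by case: wf => wp wq; exact: measurableI (IHp wp) (IHq wq).
- have -> : Sat (@MNot AP R p) = [set pt : Omega * R | 0 <= pt.2] `\` Sat p.
    apply/seteqP; split => -[w t] /=; first by case=> t0 np; split => // -[].
    by case=> t0 h; split => // hp; apply: h.
  exact: measurableD mpos (IHp wf).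
- case: wf => hJ [wp wq]; have mP := IHp wp; have mQ := IHq wq.
  case: J hJ => l r hJ.
  pose N := ~` Sat p.
  have mN : measurable N by exact: measurableC.
  have sigE : forall w t u, (forall s', t <= s' -> s' < u -> Sat p (w, s')) <->
      (u%:E <= hit N (w, t))%E.
    move=> w t u; split.
    - move=> h; apply/ereal_infP => _ [v [Nv tv] <-]; rewrite lee_fin leNgt.
      by apply/negP => vu; exact: Nv (h v tv vu).
    - move=> h s' ts' s'u; apply: boolp.contrapT => nP.
      have := le_trans h (@hit_le _ _ _ N (w, t) s' nP ts').
      by rewrite lee_fin => /(lt_le_trans s'u); rewrite ltxx.
  have -> : Sat (@MUntil AP R (Interval l r) p q) = [set pt : Omega * R | 0 <= pt.2] `&`
     [set pt : Omega * R | exists v : R, [/\ Sat q (pt.1, v),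
       (if lob l then loE l pt.2 < v%:E else loE l pt.2 <= v%:E)%E,
       (if hib r then v%:E < hiE r pt.2 else v%:E <= hiE r pt.2)%E &
       (v%:E <= hit N pt)%E]].
    apply/seteqP; split => -[w t] /=.
    - move=> [t0 [s [sJ [hq hp]]]].
      have s0 := hJ s sJ.
      move: sJ; rewrite itv_boundlr => /andP[sl sr].
      split => //; exists (t + s); split.
      + by split => //=; exact: addr_ge0.
      + by apply/low_iff; rewrite (addrC t s) addrK.
      + by apply/up_iff; rewrite (addrC t s) addrK.
      + apply/sigE => s' ts' s'lt; split; [exact: le_trans t0 ts' | exact: hp].
    - move=> [t0 [v [[v0 hq] hl hu hs]]]; split => //; exists (v - t); split; [|split].
      + by rewrite itv_boundlr; apply/andP; split; [apply/low_iff|apply/up_iff].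
      + by rewrite (addrC t) subrK.
      + move=> s' ts'; rewrite (addrC t) subrK => s'lt.
        by have [] := (sigE w t v).2 hs s' ts' s'lt.
  apply: measurableI => //.
  apply: (@Gen _ _ _ P Pc (Sat q) (fun pt => loE l pt.2) (fun pt => hiE r pt.2) (hit N)) => //.
  + case: l {hJ} => [b x|b] /=; last by case: b; exact: measurable_cst.
    by apply/measurable_EFinP; apply: measurable_funD => //; exact: measurable_snd.
  + case: r {hJ} => [b x|b] /=; last by case: b; exact: measurable_cst.
    by apply/measurable_EFinP; apply: measurable_funD => //; exact: measurable_snd.
  + exact: (hit_measurable Pc).
Qed.
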